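(* Every $2$-connected graph that contains no induced subgraph isomorphic to $P_4$ and no induced subgraph isomorphic to $2K_2$ is cummerbund covered.
   Context: All graphs are finite and simple. $P_4$ is the path on $4$ vertices and $2K_2$ is the graph consisting of two vertex-disjoint edges. A cummerbund of a graph is a longest cycle in it; a graph is cummerbund covered if every vertex lies in some cummerbund. *)

(* Defs.v *)
From mathcomp Require Import all_boot.
Set Implicit Arguments. Unset Strict Implicit. Unset Printing Implicit Defensive.

Definition simple_graph (T : finType) (e : rel T) : Prop :=
  symmetric e /\ irreflexive e.

Definition connected_graph (T : finType) (e : rel T) : Prop :=
  forall x y : T, connect e x y.

Definition del_vertex (T : finType) (e : rel T) (v : T) : rel T :=
  [rel x y | [&& x != v, y != v & e x y]].

Definition two_connected (T : finType) (e : rel T) : Prop :=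
  2 < #|T| /\ connected_graph e /\
  forall v x y : T, x != v -> y != v -> connect (del_vertex e v) x y.

Definition has_induced_P4 (T : finType) (e : rel T) : Prop :=
  exists a b c d : T, uniq [:: a; b; c; d] /\
    [&& e a b, e b c, e c d, ~~ e a c, ~~ e b d & ~~ e a d].

Definition has_induced_2K2 (T : finType) (e : rel T) : Prop :=
  exists a b c d : T, uniq [:: a; b; c; d] /\
    [&& e a b, e c d, ~~ e a c, ~~ e a d, ~~ e b c & ~~ e b d].

Definition is_graph_cycle (T : finType) (e : rel T) (c : seq T) : Prop :=
  [/\ 2 < size c, uniq c & cycle e c].

Definition cummerbund (T : finType) (e : rel T) (c : seq T) : Prop :=
  is_graph_cycle e c /\ forall c', is_graph_cycle e c' -> size c' <= size c.

Definition cummerbund_covered (T : finType) (e : rel T) : Prop :=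
  forall v : T, exists c, cummerbund e c /\ v \in c.

(* Main.v *)
Require Import Defs.
From mathcomp Require Import all_boot zify.
From Stdlib Require Import Classical.
Set Implicit Arguments. Unset Strict Implicit. Unset Printing Implicit Defensive.

Ltac clr := repeat match goal with H : ?P |- _ =>
  match type of P with Prop => clear H end end.
Ltac lia' := clr; lia.


Lemma uniq_sub (T : eqType) (s t : seq T) :
  uniq s -> (forall x, count_mem x t <= count_mem x s) -> uniq t.
Proof.
move=> us H; apply: count_mem_uniq => x.
have := H x; rewrite (count_uniq_mem x us).
case: (boolP (x \in t)) => xt.
  have : 0 < count_mem x t by rewrite -has_count has_pred1.
  by case: (x \in s) => /=; lia.
by move=> _; apply/count_memPn.
Qed.

Lemma path_rev_rcons (T : Type) (e : rel T) a p b :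
  symmetric e -> path e a (rcons p b) -> path e b (rcons (rev p) a).
Proof.
move=> sym; elim: p a => [|x p IH] a /=; first by rewrite sym andbT.
case/andP=> eax hp; rewrite rev_cons rcons_path last_rcons IH //.
by rewrite sym.
Qed.

Lemma cycle_split (T : Type) (e : rel T) a P b Q :
  cycle e (a :: P ++ b :: Q) -> path e a (rcons P b) /\ path e b (rcons Q a).
Proof.
rewrite /= rcons_cat rcons_cons cat_path /=.
by case/and3P=> h1 h2 h3; rewrite rcons_path h1 h2 h3.
Qed.

Lemma cycle_mk (T : Type) (e : rel T) v a P b :
  e v a -> path e a (rcons P b) -> e b v -> cycle e (v :: a :: rcons P b).
Proof.
move=> h1 h2 h3 /=; rewrite h1 /= rcons_path last_rcons h2 h3.
by [].
Qed.

Lemma cycle_cross (T : Type) (e : rel T) v a Q q p P b :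
  symmetric e -> e v a -> path e q (rcons Q a) -> e q p ->
  path e p (rcons P b) -> e b v ->
  cycle e (v :: a :: rev (q :: Q) ++ p :: rcons P b).
Proof.
move=> sym h1 h2 h3 h4 h5 /=; rewrite h1 /= rev_cons rcons_cat rcons_cons.
rewrite cat_path last_rcons (path_rev_rcons sym h2) /= h3 /=.
by rewrite rcons_path last_rcons h4 h5.
Qed.

Lemma rot_head (T : finType) (e : rel T) C x :
  is_graph_cycle e C -> x \in C ->
  exists R, [/\ is_graph_cycle e (x :: R), size (x :: R) = size C & (x :: R) =i C].
Proof.
move=> [h1 h2 h3] xC; case: (rot_to xC) => i R HR.
exists R; rewrite -HR size_rot; split => //; last exact: mem_rot.
by split; rewrite ?size_rot ?rot_uniq ?rot_cycle.
Qed.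


Lemma caseA (T : finType) (e : rel T) v c0 P cj Q :
  symmetric e -> ~ has_induced_P4 e -> ~ has_induced_2K2 e ->
  is_graph_cycle e (c0 :: P ++ cj :: Q) -> v \notin (c0 :: P ++ cj :: Q) ->
  e v c0 -> e v cj ->
  exists t, [/\ is_graph_cycle e t, v \in t & size (c0 :: P ++ cj :: Q) <= size t].
Proof.
move=> sym nP4 n2K2 [hs hu hc] vC hv0 hvj.
have [hP hQ] := cycle_split hc.
have us : uniq (v :: c0 :: P ++ cj :: Q) by rewrite cons_uniq vC hu.
have Hsub : forall t, (forall x, count_mem x t <= count_mem x (v :: c0 :: P ++ cj :: Q)) -> uniq t.
  by move=> t; apply: uniq_sub.
have hjv : e cj v by rewrite sym.
case: (leqP (size P) 1) => sP.
  exists (v :: cj :: rcons Q c0); split.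
  - split; first by rewrite /= size_rcons.
      by apply: Hsub => x; rewrite /= -cats1 !count_cat /=; lia'.
    by apply: cycle_mk => //; rewrite sym.
  - by rewrite inE eqxx.
  - by move: sP; rewrite /= size_cat /= size_rcons; lia'.
case: (leqP (size Q) 1) => sQ.
  exists (v :: c0 :: rcons P cj); split.
  - split; first by rewrite /= size_rcons.
      by apply: Hsub => x; rewrite /= -cats1 !count_cat /=; lia'.
    by apply: cycle_mk => //; rewrite sym.
  - by rewrite inE eqxx.
  - by move: sQ; rewrite /= size_cat /= size_rcons; lia'.
case: P sP hP hs hu hc vC us Hsub => [|p1 [|p2 P']] //= _.
case: Q sQ hQ => [|q1 [|q2 Q']] //= _.
move=> /andP[hq1 hQ1] /andP[hp1 hP1] _ _ _ _ us Hsub.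
have /andP[ep12 hP2] := hP1.
have /andP[eq12 hQ2] := hQ1.
case E11: (e p1 q1).
  exists (v :: c0 :: rev (q1 :: q2 :: Q') ++ p1 :: rcons (p2 :: P') cj); split.
  - split; first by rewrite /= !size_cat /= ?size_rev ?size_rcons; lia'.
      by apply: Hsub => x; rewrite /= -!cats1 !(count_cat, count_rev) /= ?count_cat /=; lia'.
    by apply: cycle_cross => //; rewrite sym.
  - by rewrite inE eqxx.
  - by rewrite /= !size_cat /= size_rev size_rcons /=; lia'.
case E21: (e p2 q1).
  exists (v :: c0 :: rev (q1 :: q2 :: Q') ++ p2 :: rcons P' cj); split.
  - split; first by rewrite /= !size_cat /= ?size_rev ?size_rcons; lia'.
      by apply: Hsub => x; rewrite /= -!cats1 !(count_cat, count_rev) /= ?count_cat /=; lia'.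
    by apply: cycle_cross => //; rewrite sym.
  - by rewrite inE eqxx.
  - by rewrite /= !size_cat /= size_rev size_rcons /=; lia'.
case E12: (e p1 q2).
  exists (v :: c0 :: rev (q2 :: Q') ++ p1 :: rcons (p2 :: P') cj); split.
  - split; first by rewrite /= !size_cat /= ?size_rev ?size_rcons; lia'.
      by apply: Hsub => x; rewrite /= -!cats1 !(count_cat, count_rev) /= ?count_cat /=; lia'.
    by apply: cycle_cross => //; rewrite sym.
  - by rewrite inE eqxx.
  - by rewrite /= !size_cat /= size_rev size_rcons /=; lia'.
have u4 : uniq [:: p1; p2; q1; q2].
  by apply: Hsub => x; rewrite /= !count_cat /=; lia'.
case E22: (e p2 q2).
  exfalso; apply: nP4; exists p1, p2, q2, q1; split.
    by apply: (uniq_sub u4) => x /=; lia'.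
  by rewrite ep12 E22 (sym q2) eq12 E12 E21 E11.
exfalso; apply: n2K2; exists p1, p2, q1, q2; split => //.
by rewrite ep12 eq12 E11 E12 E21 E22.
Qed.


Lemma caseB (T : finType) (e : rel T) v w c0 y x R :
  symmetric e -> irreflexive e -> ~ has_induced_2K2 e ->
  is_graph_cycle e (c0 :: y :: x :: R) -> v \notin (c0 :: y :: x :: R) ->
  w \notin (c0 :: y :: x :: R) ->
  e v c0 -> e v w -> ~~ e v y -> ~~ e v x ->
  exists t, [/\ is_graph_cycle e t, v \in t & size (c0 :: y :: x :: R) <= size t].
Proof.
move=> sym irr n2K2 [hs hu hc] vC wC hv0 hvw nvy nvx.
have vw : v != w by apply: contraTneq hvw => ->; rewrite irr.
have us : uniq (v :: w :: c0 :: y :: x :: R).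
  by rewrite (cons_uniq v) (cons_uniq w) in_cons negb_or vw vC wC hu.
have Hsub : forall t, (forall z, count_mem z t <= count_mem z (v :: w :: c0 :: y :: x :: R)) -> uniq t.
  by move=> t; apply: uniq_sub.
move: hc; rewrite /= => /andP[_ hyx].
have /andP[eyx hx] := hyx.
have hcv : e c0 v by rewrite sym.
case E1: (e w y).
  exists (v :: w :: rcons (y :: x :: R) c0); split.
  - split; first by rewrite /= size_rcons.
      by apply: Hsub => z; rewrite /= -cats1 !count_cat /=; lia'.
    by apply: cycle_mk => //=; rewrite E1.
  - by rewrite inE eqxx.
  - by rewrite /= !size_rcons /=; lia'.
case E2: (e w x).
  exists (v :: w :: rcons (x :: R) c0); split.
  - split; first by rewrite /= size_rcons.
      by apply: Hsub => z; rewrite /= -cats1 !count_cat /=; lia'.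
    by apply: cycle_mk => //=; rewrite E2.
  - by rewrite inE eqxx.
  - by rewrite /= !size_rcons /=; lia'.
exfalso; apply: n2K2; exists v, w, y, x; split.
  by apply: Hsub => z /=; lia'.
by rewrite hvw eyx nvy nvx E1 E2.
Qed.

Lemma caseC (T : finType) (e : rel T) v w w' a b c R :
  symmetric e -> irreflexive e -> ~ has_induced_2K2 e ->
  is_graph_cycle e (a :: b :: c :: R) -> v \notin (a :: b :: c :: R) ->
  w \notin (a :: b :: c :: R) -> w' \notin (a :: b :: c :: R) -> w != w' ->
  e v w -> e v w' -> e w a -> ~~ e v b -> ~~ e v c ->
  exists t, [/\ is_graph_cycle e t, v \in t & size (a :: b :: c :: R) <= size t].
Proof.
move=> sym irr n2K2 [hs hu hc] vC wC w'C ww' hvw hvw' ewa nvb nvc.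
have vw : v != w by apply: contraTneq hvw => ->; rewrite irr.
have vw' : v != w' by apply: contraTneq hvw' => ->; rewrite irr.
have us : uniq (v :: w :: w' :: a :: b :: c :: R).
  rewrite (cons_uniq v) (cons_uniq w) (cons_uniq w') in_cons negb_or vw.
  by rewrite in_cons negb_or vw' vC in_cons negb_or ww' wC w'C hu.
have Hsub : forall t, (forall z, count_mem z t <= count_mem z (v :: w :: w' :: a :: b :: c :: R)) -> uniq t.
  by move=> t; apply: uniq_sub.
move: hc; rewrite /= => /andP[_ hbc].
have /andP[ebc hc] := hbc.
have hwv : e w v by rewrite sym.
have haw : e a w by rewrite sym.
case E1: (e w' b).
  exists (v :: w' :: rcons (rcons (b :: c :: R) a) w); split.
  - split; first by rewrite /= !size_rcons.
      by apply: Hsub => z; rewrite /= -!cats1 !count_cat /= ?count_cat /=; lia'.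
    apply: cycle_mk => //; rewrite rcons_path last_rcons haw andbT /=.
    by rewrite E1.
  - by rewrite inE eqxx.
  - by rewrite /= !size_rcons /=; lia'.
case E2: (e w' c).
  exists (v :: w' :: rcons (rcons (c :: R) a) w); split.
  - split; first by rewrite /= !size_rcons.
      by apply: Hsub => z; rewrite /= -!cats1 !count_cat /= ?count_cat /=; lia'.
    apply: cycle_mk => //; rewrite rcons_path last_rcons haw andbT /=.
    by rewrite E2.
  - by rewrite inE eqxx.
  - by rewrite /= !size_rcons /=; lia'.
exfalso; apply: n2K2; exists v, w', b, c; split.
  by apply: Hsub => z /=; lia'.
by rewrite hvw' ebc nvb nvc E1 E2.
Qed.

Lemma two_nbrs (T : finType) (e : rel T) u :
  irreflexive e -> two_connected e -> exists n1 n2, [/\ n1 != n2, e u n1 & e u n2].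
Proof.
move=> irr [c3 [conn del]].
have ex2 : forall a b : T, exists z, (z != a) && (z != b).
  move=> a b; case: (pickP (fun z => (z != a) && (z != b))) => [z hz|H].
    by exists z.
  have : #|T| <= 2.
    rewrite -cardsT; apply: (@leq_trans #|[set a; b]|).
      apply: subset_leq_card; apply/subsetP => z _; rewrite !inE.
      by have := H z; simpl; case: (z == a); case: (z == b).
    by rewrite cards2; case: (a != b).
  by rewrite leqNgt c3.
have [y /andP [hy _]] := ex2 u u.
have /connectP [p hp ey] := conn u y.
case: p hp ey => [|n1 p] /=; first by move=> _ ey; rewrite ey eqxx in hy.
move=> /andP [hn1 _] _.
have [z /andP [zu zn1]] := ex2 u n1.
have un1 : u != n1 by apply: contraTneq hn1 => ->; rewrite irr.
have /connectP [q hq ez] := del n1 u z un1 zn1.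
case: q hq ez => [|n2 q] /=; first by move=> _ ez; rewrite ez eqxx in zu.
move=> /andP [hd _] _; move: hd; rewrite /del_vertex /= => /and3P [_ n21 hn2].
by exists n1, n2; split => //; rewrite eq_sym.
Qed.

Lemma path_del_all (T : finType) (e : rel T) (u x : T) (p : seq T) :
  path (del_vertex e u) x p -> all (fun z => z != u) p.
Proof.
elim: p x => //= y p IH x /andP [h hp].
by move: h; rewrite /del_vertex /= => /and3P [_ -> _]; rewrite (IH y).
Qed.

Lemma cycle_exists (T : finType) (e : rel T) (u : T) :
  symmetric e -> irreflexive e -> two_connected e -> exists c, is_graph_cycle e c.
Proof.
move=> sym irr tc.
have [n1 [n2 [n12 h1 h2]]] := two_nbrs u irr tc.
have [_ [_ del]] := tc.
have n1u : n1 != u by apply: contraTneq h1 => ->; rewrite irr.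
have n2u : n2 != u by apply: contraTneq h2 => ->; rewrite irr.
have /connectP [p hp] := del u n1 n2 n1u n2u.
case: (shortenP hp) => p' hp' up' _ ey.
have hall := path_del_all hp'.
exists (u :: n1 :: p'); split.
- by case: p' hp' up' ey hall => [|z p'] //= _ _ E; rewrite E eqxx in n12.
- rewrite cons_uniq up' andbT in_cons negb_or eq_sym n1u /=.
  by apply/negP => /(allP hall); rewrite eqxx.
- rewrite /= h1 /= rcons_path -ey sym h2 andbT.
  by apply: sub_path hp' => a b; rewrite /del_vertex /= => /and3P [].
Qed.

Lemma longest_exists (T : finType) (e : rel T) c0 :
  is_graph_cycle e c0 -> exists c, cummerbund e c.
Proof.
have bnd : forall c, is_graph_cycle e c -> size c <= #|T|.
  by move=> c [_ u _]; rewrite -(card_uniqP u) max_card.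
suff H : forall n c, is_graph_cycle e c -> #|T| - size c <= n -> exists c, cummerbund e c.
  by move=> h; apply: (H _ c0 h).
elim=> [|n IH] c hc hn.
  exists c; split => // c' hc'; apply: leq_trans (bnd _ hc') _; lia.
case: (classic (forall c', is_graph_cycle e c' -> size c' <= size c)) => H.
  by exists c.
have [c' hc'] := not_all_ex_not _ _ H.
have [h1 h2] := imply_to_and _ _ hc'.
apply: (IH c' h1); have := bnd _ h1; move/negP: h2; rewrite -ltnNge; lia.
Qed.

Theorem theorem12 (T : finType) (e : rel T) :
  simple_graph e -> two_connected e ->
  ~ has_induced_P4 e -> ~ has_induced_2K2 e ->
  cummerbund_covered e.
Proof.
move=> [sym irr] tc nP4 n2K2 v.
have [C0 h0] := cycle_exists v sym irr tc.
have [C [HC HCmax]] := longest_exists h0.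
case: (boolP (v \in C)) => vC; first by exists C.
suff [t [Ht vt Hsz]] : exists t, [/\ is_graph_cycle e t, v \in t & size C <= size t].
  by exists t; split => //; split => // c' /HCmax/leq_trans; apply.
have [n1 [n2 [n12 hv1 hv2]]] := two_nbrs v irr tc.
have [HCs HCu _] := HC.
case: (boolP (has (e v) C)) => hasC.
  case/hasP: hasC => c0 c0C hvc0.
  have [R [HR szR memR]] := rot_head HC c0C.
  rewrite -szR.
  have vR : v \notin c0 :: R by rewrite memR.
  case: (boolP (has (fun z => (z != c0) && e v z) R)) => hasR.
    case/hasP: hasR => cj cjR /andP [_ hvcj].
    case/splitPr: cjR HR vR => P Q HR vR.
    exact: caseA sym nP4 n2K2 HR vR hvc0 hvcj.
  have nR : forall z, z \in R -> z != c0 -> ~~ e v z.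
    by move=> z zR zc; apply: contra hasR => h; apply/hasP; exists z => //; rewrite zc.
  have [w [hvw wc0]] : exists w, e v w /\ w != c0.
    case: (eqVneq n1 c0) => [E|ne]; last by exists n1.
    by exists n2; split => //; rewrite -E eq_sym.
  have wR : w \notin c0 :: R.
    rewrite in_cons negb_or wc0 /=; apply: contra hasR => wR.
    by apply/hasP; exists w => //; rewrite wc0.
  have [_ HRu _] := HR.
  have HRs : 2 < size (c0 :: R) by rewrite szR.
  clear szR; case: R HR HRs memR vR hasR nR wR HRu => [|y [|x R']] HR // _ _ vR _ nR wR HRu.
  move: (HRu); rewrite /= !inE !negb_or => /andP [/and3P [c0y c0x _] _].
  apply: caseB sym irr n2K2 HR vR wR hvc0 hvw _ _.
    by apply: nR; rewrite ?inE ?eqxx // eq_sym.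
  by apply: nR; rewrite ?inE ?eqxx ?orbT // eq_sym.
have nC : forall z, z \in C -> ~~ e v z.
  by move=> z zC; apply: contra hasC => h; apply/hasP; exists z.
have n1C : n1 \notin C by apply: contra hasC => h; apply/hasP; exists n1.
have n2C : n2 \notin C by apply: contra hasC => h; apply/hasP; exists n2.
have [a [aC hn1a]] : exists a, a \in C /\ e n1 a.
  case: C HC vC hasC nC n1C n2C HCs HCu HCmax => [|c0 [|c1 r]] // HC vC hasC nC n1C n2C HCs HCu _.
  case E0: (e n1 c0); first by exists c0; rewrite inE eqxx.
  case E1: (e n1 c1); first by exists c1; rewrite !inE eqxx orbT.
  exfalso; apply: n2K2; exists v, n1, c0, c1; split.
    move: HCu n1C vC; rewrite /= !inE !negb_or.
    have vn1 : v != n1 by apply: contraTneq hv1 => ->; rewrite irr.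
    by rewrite vn1 => /andP [/andP [-> _] _] /and3P [-> -> _] /and3P [-> -> _].
  have [_ _ hcyc] := HC; move: hcyc; rewrite /= => /andP [e01 _].
  by rewrite hv1 e01 E0 E1 !nC ?inE ?eqxx ?orbT.
have [R [HR szR memR]] := rot_head HC aC.
rewrite -szR.
have vR : v \notin a :: R by rewrite memR.
have n1R : n1 \notin a :: R by rewrite memR.
have n2R : n2 \notin a :: R by rewrite memR.
have nR : forall z, z \in a :: R -> ~~ e v z by move=> z; rewrite memR; apply: nC.
have HRs : 2 < size (a :: R) by rewrite szR.
clear szR; case: R HR HRs memR vR n1R n2R nR => [|b [|c R']] HR // _ _ vR n1R n2R nR.
apply: caseC sym irr n2K2 HR vR n1R n2R n12 hv1 hv2 hn1a _ _; apply: nR;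
  by rewrite !inE eqxx ?orbT.
Qed.
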